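(* Let $0\to N\to G\xrightarrow{p} Q\to 1$ be a short exact sequence of groups with $N$ abelian (written additively), and let $End^Q_N(G)$ be the set of endomorphisms $\alpha$ of $G$ with $\alpha(N)\subseteq N$ and $p\circ\alpha=p$, equipped with the ring structure with addition $(\alpha_1\boxplus\alpha_2)(x)=\alpha_1(x)-x+\alpha_2(x)$, multiplication $(\alpha_2\boxtimes\alpha_1)(x)=\alpha_2(\alpha_1(x))-\alpha_1(x)+x-\alpha_2(x)+x$ and zero element $\mathrm{id}_G$. Then for all $f,g\in End^Q_N(G)$ one has $f\ast g=f\circ g$, where $f\ast g:=f\boxplus g\boxplus(f\boxtimes g)$. In particular the group $QR(End^Q_N(G))$ of quasi-regular elements coincides with the group $Aut^Q_N(G)$ of automorphisms in $End^Q_N(G)$ under composition.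
   Context: For a ring $R$ with zero $0$, $r\ast s:=r+s+rs$; $r$ is quasi-regular if there is $s$ with $r\ast s=0=s\ast r$, and the quasi-regular elements form a group $QR(R)$ under $\ast$. *)

(* Defs.v *)
From HB Require Import structures.
From mathcomp Require Import all_boot.
Set Implicit Arguments. Unset Strict Implicit. Unset Printing Implicit Defensive.

(* Groups G, Q are MathComp (possibly infinite) groupTypes, written
   multiplicatively: the paper's additive  a - b + c  is  a * b^-1 * c. *)
Local Open Scope group_scope.

Section EndQN.
Variables (G Q : groupType) (N : pred G) (p : G -> Q).

Definition EndQN (a : G -> G) : Prop :=
  [/\ monoid_morphism a, {in N, forall x, a x \in N} & forall x, p (a x) = p x].

Definition boxplus (a1 a2 : G -> G) : G -> G := fun x => a1 x * x^-1 * a2 x.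

Definition boxtimes (a2 a1 : G -> G) : G -> G :=
  fun x => a2 (a1 x) * (a1 x)^-1 * x * (a2 x)^-1 * x.

Definition qstar (f g : G -> G) : G -> G := boxplus (boxplus f g) (boxtimes f g).

Definition quasi_regular (f : G -> G) : Prop :=
  exists2 s, EndQN s & qstar f s = id /\ qstar s f = id.

Definition AutQN (f : G -> G) : Prop := EndQN f /\ bijective f.
End EndQN.

(* Main.v *)
Require Import Defs.
From HB Require Import structures.
From mathcomp Require Import all_boot.
From Stdlib Require Import FunctionalExtensionality.
Local Open Scope group_scope.

Theorem lemma14 (G Q : groupType) (N : pred G) (p : G -> Q)
  (* N is an abelian subgroup of G *)
  (HN : group_closed N) (HNab : {in N &, forall x y, x * y = y * x})
  (* 0 -> N -> G -p-> Q -> 1 is exact *)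
  (Hp : monoid_morphism p) (Hpsurj : forall q : Q, exists x : G, p x = q)
  (Hker : forall x : G, p x = 1 <-> x \in N) :
  (forall f g : G -> G, EndQN N p f -> EndQN N p g -> qstar f g = f \o g) /\
  (forall f : G -> G, EndQN N p f -> (quasi_regular N p f <-> AutQN N p f)).
Proof.
have inN : forall f, EndQN N p f -> forall x, f x * x^-1 \in N.
  move=> f [_ _ pf] x; apply/Hker.
  by rewrite Hp.2 pf -Hp.2 mulgV Hp.1.
have NM := group_closedM HN.
have part1 : forall f g : G -> G, EndQN N p f -> EndQN N p g -> qstar f g = f \o g.
  move=> f g Ef Eg; apply: functional_extensionality => x.
  rewrite /qstar /boxplus /boxtimes /=.
  set a := f x * x^-1. set b := g x * x^-1. set c := f (g x) * (g x)^-1.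
  have Ha : a \in N by exact: inN.
  have Hb : b \in N by exact: inN.
  have Hc : c \in N by exact: inN.
  have -> : f x * x^-1 * g x * x^-1 *
     (f (g x) * (g x)^-1 * x * (f x)^-1 * x) = a * (b * c) * a^-1 * x.
    by rewrite /a /b /c !invgM !invgK !mulgA.
  rewrite (HNab _ _ Ha (NM _ _ Hb Hc)) mulgK (HNab _ _ Hb Hc) /b /c.
  by rewrite !mulgA !mulgVK.
split=> // f Ef; split.
  move=> [s Es [H1 H2]]; split=> //.
  rewrite (part1 _ _ Ef Es) in H1; rewrite (part1 _ _ Es Ef) in H2.
  exists s => x; [exact: (congr1 (fun h => h x) H2) | exact: (congr1 (fun h => h x) H1)].
move=> [_ [g fK gK]].
have Eg : EndQN N p g.
  case: Ef => [[f1 fM] fN pf]; split.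
  - split; first by apply: (can_inj fK); rewrite gK f1.
    by move=> x y; apply: (can_inj fK); rewrite fM !gK.
  - move=> x /Hker px; apply/Hker; by rewrite -pf gK.
  - by move=> x; rewrite -pf gK.
exists g => //; rewrite !part1 //; split; apply: functional_extensionality => x /=;
  by rewrite ?fK ?gK.
Qed.
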